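(* For a ring $R$, the following are equivalent: (1) $R$ is a DT ring; (2) $R$ is a semi-tripotent ring.
   Context: All rings are associative with identity. $J(R)$ is the Jacobson radical, $U(R)$ the group of units. $\Delta(R)=\{x\in R: x+u\in U(R)\text{ for all }u\in U(R)\}$. $\mathrm{Tr}(R)=\{x\in R: x^3=x\}$. A ring $R$ is a DT ring if every $r\in R$ can be written $r=e+d$ with $e\in\mathrm{Tr}(R)$ and $d\in\Delta(R)$. A ring $R$ is semi-tripotent if every $r\in R$ can be written $r=e+j$ with $e\in\mathrm{Tr}(R)$ and $j\in J(R)$. *)

(* Defs.v *)
From mathcomp Require Import all_boot all_algebra.
Set Implicit Arguments. Unset Strict Implicit. Unset Printing Implicit Defensive.
Import GRing.Theory.
Local Open Scope ring_scope.

Definition left_ideal (R : unitRingType) (I : R -> Prop) : Prop :=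
  [/\ I 0, (forall x y, I x -> I y -> I (x + y)), (forall x, I x -> I (- x))
    & (forall r x, I x -> I (r * x))].

Definition maximal_left_ideal (R : unitRingType) (I : R -> Prop) : Prop :=
  [/\ left_ideal I, ~ I 1
    & forall K : R -> Prop, left_ideal K -> ~ K 1 ->
        (forall x, I x -> K x) -> forall x, K x -> I x].

Definition jacobson (R : unitRingType) (x : R) : Prop :=
  forall I : R -> Prop, maximal_left_ideal I -> I x.

Definition Delta (R : unitRingType) (x : R) : Prop :=
  forall u : R, u \is a GRing.unit -> x + u \is a GRing.unit.

Definition tripotent (R : unitRingType) (x : R) : Prop := x ^+ 3 = x.

Definition DT_ring (R : unitRingType) : Prop :=
  forall r : R, exists e d, [/\ tripotent e, Delta d & r = e + d].

Definition semi_tripotent (R : unitRingType) : Prop :=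
  forall r : R, exists e j, [/\ tripotent e, jacobson j & r = e + j].

(* Main.v *)
Require Import Defs.
From mathcomp Require Import all_boot all_algebra.
From mathcomp Require Import classical_sets.
From Stdlib Require Import Classical.
Set Implicit Arguments. Unset Strict Implicit.
Import GRing.Theory.
Local Open Scope ring_scope.

Section S.
Variable R : unitRingType.
Implicit Types (a b d x y u : R).

Lemma DeltaN d : Delta d -> Delta (- d).
Proof.
move=> Hd u Hu; rewrite -[u]opprK -opprD unitrN; apply: Hd; by rewrite unitrN.
Qed.

Lemma DeltaD a b : Delta a -> Delta b -> Delta (a + b).
Proof. move=> Ha Hb u Hu; rewrite -addrA; apply: Ha; exact: Hb. Qed.

Lemma DeltaMl u d : u \is a GRing.unit -> Delta d -> Delta (u * d).
Proof.
move=> Hu Hd v Hv.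
have -> : u * d + v = u * (d + u^-1 * v) by rewrite mulrDr mulrA mulrV // mul1r.
rewrite unitrMr //; apply: Hd; rewrite unitrMl //; by rewrite unitrV.
Qed.

Lemma Delta_1sub d : Delta d -> (1 - d) \is a GRing.unit.
Proof. move=> Hd; rewrite addrC; exact: (DeltaN Hd (unitr1 R)). Qed.

Lemma DeltaM a b : Delta a -> Delta b -> Delta (a * b).
Proof.
move=> Ha Hb.
have -> : a * b = (a + 1) * b + - b by rewrite mulrDl mul1r addrK.
apply: DeltaD; last exact: DeltaN.
apply: DeltaMl => //; apply: Ha; exact: unitr1.
Qed.

Lemma unit_in_ideal (I : R -> Prop) x : left_ideal I -> I x ->
  x \is a GRing.unit -> I 1.
Proof. by case=> _ _ _ HM Hx Hu; rewrite -(mulVr Hu); apply: HM. Qed.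


Lemma Delta_jac d : DT_ring R -> Delta d -> jacobson d.
Proof.
move=> DT Hd I [[I0 ID IN IM] I1 Imax].
apply: NNPP => nId.
pose K x := exists i r, I i /\ x = i + r * d.
have KI : left_ideal K.
  split.
  - by exists 0, 0; rewrite mul0r addr0.
  - move=> x y [i1 [r1 [Hi1 ->]]] [i2 [r2 [Hi2 ->]]]; exists (i1 + i2), (r1 + r2).
    by split; [exact: ID | rewrite mulrDl addrACA].
  - move=> x [i [r [Hi ->]]]; exists (-i), (-r).
    by split; [exact: IN | rewrite opprD mulNr].
  - move=> s x [i [r [Hi ->]]]; exists (s * i), (s * r).
    by split; [exact: IM | rewrite mulrDr mulrA].
have K1 : K 1.
  apply: NNPP => nK1; apply: nId.
  apply: (Imax K KI nK1) => [x Ix|]; first by exists x, 0; rewrite mul0r addr0.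
  by exists 0, 1; rewrite add0r mul1r.
case: K1 => i [r [Hi Hr]].
case: (DT r) => e [d' [He Hd' Hre]].
rewrite /tripotent in He.
pose h := e ^+ 2.
pose v := e + (1 - h).
have hh : h * h = h.
  by rewrite /h -exprD (exprS e 3) He -expr2.
have eh : e * h = e by rewrite /h -exprS He.
have he : h * e = e by rewrite /h -exprSr He.
have vv : v * v = 1.
  rewrite /v !mulrDr !mulrDl ?mulrBr ?mulrBl ?mul1r ?mulr1 ?eh ?he ?hh -?expr2 -/h.
  rewrite ?mulrN ?mulNr he eh sqrrN expr2 hh.
  by rewrite subrr addr0 addNr addr0 addrAC subrr add0r addrC subrK.
have vU : v \is a GRing.unit by apply/unitrP; exists v.
have vh : v * h = e.
  by rewrite /v mulrDl mulrBl mul1r eh hh subrr addr0.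
have wU : (1 - d' * d) \is a GRing.unit by apply: Delta_1sub; exact: DeltaM.
have Hi' : i = (1 - d' * d) - v * (h * d).
  have -> : i = 1 - r * d by rewrite Hr addrK.
  by rewrite Hre mulrDl mulrA vh opprD addrA addrAC.
pose u := v * (1 - d' * d).
have uU : u \is a GRing.unit by rewrite unitrMl.
pose a := u - h * d.
have Ia : I a.
  have -> : a = v * i.
    by rewrite Hi' mulrBr [v * (v * _)]mulrA vv mul1r.
  exact: IM.
pose X := d * u^-1 * h.
pose N := (1 - h) * X.
have Xh : X * (1 - h) = 0.
  by rewrite /X -mulrA mulrBr mulr1 hh subrr mulr0.
have NN : N * N = 0.
  by rewrite /N mulrA -(mulrA (1 - h) X) Xh mulr0 mul0r.
have zU : (1 + N) \is a GRing.unit.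
  apply/unitrP; exists (1 - N); split.
    rewrite !(mulrDr, mulrDl, mulrBr, mulrBl, mul1r, mulr1) ?mulNr ?mulrN NN ?oppr0 ?addr0 ?subr0.
    by rewrite subrK.
  rewrite !(mulrDr, mulrDl, mulrBr, mulrBl, mul1r, mulr1) ?mulNr ?mulrN NN ?oppr0 ?addr0 ?subr0.
  by rewrite addrK.
have ua : u = a + h * d by rewrite /a subrK.
have hu : h * u = u - (1 - h) * a.
  rewrite {2}ua mulrBl mul1r {1}ua mulrDr mulrA hh.
  rewrite opprB [a + h * d]addrC -addrA [a + (h * a - a)]addrC subrK; exact: addrC.
have Xu : X * u = d - d * u^-1 * (1 - h) * a.
  by rewrite /X -mulrA hu mulrBr divrK // mulrA.
pose Y := (1 - h) * d / u * (1 - h).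
have key : d - (1 + N) * u = Y * a - a.
  rewrite mulrDl mul1r /N -mulrA Xu mulrBr !mulrA -/Y.
  rewrite {1}ua mulrBl mul1r.
  rewrite -(addrA a) [h * d + (d - h * d - Y * a)]addrA [h * d + (d - h * d)]addrC subrK.
  rewrite opprD opprB.
  by rewrite opprB addrCA [d + (_ - d)]addrCA subrr addr0 addrC.
have Iz : I (d - (1 + N) * u).
  by rewrite key -[a in _ - a]mul1r -mulrBl; exact: IM.
apply: I1; apply: (unit_in_ideal (And4 I0 ID IN IM) Iz).
apply: Hd; rewrite unitrN unitrMl //.
Qed.

Lemma exists_max (L : R -> Prop) : left_ideal L -> ~ L 1 ->
  exists I, maximal_left_ideal I /\ (forall x, L x -> I x).
Proof.
move=> [L0 LD LN LM] L1.
pose P (X : set R) := (exists y, X y) ->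
  [/\ left_ideal X, ~ X 1 & forall x, L x -> X x].
have [A [PA Amax]] : exists A, P A /\ forall B, (A `<` B)%classic -> ~ P B.
  apply: Zorn_bigcup => F FP Ftot [y [X FX Xy]].
  have [[X0 XD XN XM] X1 LX] := FP X FX (ex_intro _ y Xy).
  split; first split.
  - by exists X.
  - move=> a b [Xa FXa aXa] [Xb FXb bXb].
    case: (Ftot _ _ FXa FXb) => sub.
    + have [[_ D _ _] _ _] := FP Xb FXb (ex_intro _ b bXb).
      by exists Xb => //; apply: D => //; exact: sub.
    + have [[_ D _ _] _ _] := FP Xa FXa (ex_intro _ a aXa).
      by exists Xa => //; apply: D => //; exact: sub.
  - move=> a [Xa FXa aXa].
    have [[_ _ N _] _ _] := FP Xa FXa (ex_intro _ a aXa).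
    by exists Xa => //; apply: N.
  - move=> r a [Xa FXa aXa].
    have [[_ _ _ M] _ _] := FP Xa FXa (ex_intro _ a aXa).
    by exists Xa => //; apply: M.
  - move=> [Z FZ Z1]; have [_ Z1' _] := FP Z FZ (ex_intro _ 1 Z1); exact: Z1' Z1.
  - by move=> x Lx; exists X => //; exact: LX.
have Ane : exists y, A y.
  apply: NNPP => nA; apply: (Amax L).
    split; first by move=> x Ax; exfalso; apply: nA; exists x.
    by move=> LA; apply: nA; exists 0; exact: LA _ L0.
  by move=> _; split.
have [AI A1 LA] := PA Ane.
exists A; split => //; split => //.
move=> K KI K1 AK x Kx; apply: NNPP => nAx; apply: (Amax K).
  by split => // KA; apply: nAx; exact: KA.
by move=> _; split => // y Ly; apply: AK; exact: LA.
Qed.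

Lemma jac_mull (r : R) x : jacobson x -> jacobson (r * x).
Proof. by move=> Hx I MI; case: (MI) => [[_ _ _ M] _ _]; apply: M; exact: Hx. Qed.

Lemma jac_opp x : jacobson x -> jacobson (- x).
Proof. by move=> Hx I MI; case: (MI) => [[_ _ N _] _ _]; apply: N; exact: Hx. Qed.

Lemma jac_linv x : jacobson x -> exists a, a * (1 + x) = 1.
Proof.
move=> Hx; apply: NNPP => nex.
pose L y := exists a, y = a * (1 + x).
have LI : left_ideal L.
  split.
  - by exists 0; rewrite mul0r.
  - by move=> y z [a ->] [b ->]; exists (a + b); rewrite mulrDl.
  - by move=> y [a ->]; exists (- a); rewrite mulNr.
  - by move=> r y [a ->]; exists (r * a); rewrite mulrA.
have L1 : ~ L 1 by move=> [a Ha]; apply: nex; exists a.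
have [I [MI LI']] := exists_max LI L1.
case: (MI) => [[_ D N _] I1 _]; apply: I1.
have -> : 1 = (1 + x) + - x by rewrite addrK.
apply: D; last by apply: N; exact: Hx.
by apply: LI'; exists 1; rewrite mul1r.
Qed.

Lemma jac_unit x : jacobson x -> (1 + x) \is a GRing.unit.
Proof.
move=> Hx; have [a Ha] := jac_linv Hx.
have Hax : jacobson (- (a * x)) by apply: jac_opp; exact: jac_mull.
have [b Hb] := jac_linv Hax.
have ea : 1 + - (a * x) = a by rewrite -Ha mulrDr mulr1 addrK.
rewrite ea in Hb.
have eb : b = 1 + x.
  have -> : b = b * (a * (1 + x)) by rewrite Ha mulr1.
  by rewrite mulrA Hb mul1r.
by apply/unitrP; exists a; split; [exact: Ha | rewrite -eb; exact: Hb].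
Qed.

Lemma jac_Delta (j : R) : jacobson j -> Delta j.
Proof.
move=> Hj u Hu.
have -> : j + u = u * (1 + u^-1 * j) by rewrite mulrDr mulr1 mulrA mulrV // mul1r addrC.
rewrite unitrMr //; apply: jac_unit; exact: jac_mull.
Qed.

End S.

Theorem corollary4p9 (R : unitRingType) : DT_ring R <-> semi_tripotent R.
Proof.
split.
- move=> DT r; have [e [d [He Hd ->]]] := DT r.
  by exists e, d; split => //; exact: Delta_jac.
- move=> ST r; have [e [j [He Hj ->]]] := ST r.
  by exists e, j; split => //; exact: jac_Delta.
Qed.
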